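(* Consider a finite-horizon tabular MDP with stationary transition kernel $P$, $S$ states, $A$ actions, horizon $H$, and $m$ i.i.d. episodes from behavior policy $\mu$; for each $t\in[H]$ let $V^{\rm in}_{t+1}:\mathcal S\to[0,H]$ be fixed (not depending on the data). With $n_{s,a}=\sum_{i=1}^m\sum_{u=1}^H\mathbf 1[s^{(i)}_u=s,a^{(i)}_u=a]$, define $\tilde\sigma_{V^{\rm in}_{t+1}}(s,a)=\sigma_{V^{\rm in}_{t+1}}(s,a)$ if $n_{s,a}\le\frac12m\sum_{t=1}^Hd^\mu_t(s,a)$, and otherwise \[ \tilde\sigma_{V^{\rm in}_{t+1}}(s,a)=\frac1{n_{s,a}}\sum_{i=1}^m\sum_{u=1}^H[V^{\rm in}_{t+1}(s^{(i)}_{u+1})]^2\mathbf 1[s^{(i)}_u=s,a^{(i)}_u=a]-\tilde z_t(s,a)^2, \] where $\tilde z_t(s,a)=\frac1{n_{s,a}}\sum_{i=1}^m\sum_{u=1}^HV^{\rm in}_{t+1}(s^{(i)}_{u+1})\mathbf 1[s^{(i)}_u=s,a^{(i)}_u=a]$. Then with probability at least $1-\delta$, for all $t\in[H]$ and $(s,a)$ with $\sum_td^\mu_t(s,a)>0$, \[ \big|\tilde\sigma_{V^{\rm in}_{t+1}}(s,a)-\sigma_{V^{\rm in}_{t+1}}(s,a)\big|\le6H^2\sqrt{\frac{\log(4HSA/\delta)}{m\sum_{t=1}^Hd^\mu_t(s,a)}}+\frac{4H^2\log(4HSA/\delta)}{m\sum_{t=1}^Hd^\mu_t(s,a)}. 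\]
   Context: Episodes: $s_1\sim d_1$, $a_u\sim\mu_u(\cdot|s_u)$, $s_{u+1}\sim P(\cdot|s_u,a_u)$. $d^\mu_t(s,a)=\mathbb P^\mu(s_t=s,a_t=a)$. $\sigma_V(s,a)=\mathrm{Var}_{s'\sim P(\cdot|s,a)}[V(s')]$. $\delta\in(0,1)$. *)

(* Defs.v *)
From HB Require Import structures.
From mathcomp Require Import all_boot all_order all_algebra.
From mathcomp Require Import reals exp.
Set Implicit Arguments. Unset Strict Implicit. Unset Printing Implicit Defensive.
Import Order.TTheory GRing.Theory Num.Theory.
Local Open Scope ring_scope.

Section Defs.
Variables (R : realType) (S A : finType) (H : nat).

(* An episode: states s_1..s_{H+1} (indices 0..H) and actions a_1..a_H (0..H-1). *)
Definition traj := ({ffun 'I_H.+1 -> S} * {ffun 'I_H -> A})%type.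

Definition st (tr : traj) (u : 'I_H) : S := tr.1 (widen_ord (leqnSn H) u).
Definition st_next (tr : traj) (u : 'I_H) : S := tr.1 (lift ord0 u).
Definition act (tr : traj) (u : 'I_H) : A := tr.2 u.

Variables (d1 : S -> R) (mu : 'I_H -> S -> A -> R) (P : S -> A -> S -> R).

Definition is_distr (T : finType) (p : T -> R) :=
  (forall x, 0 <= p x) /\ \sum_(x : T) p x = 1.

Definition traj_prob (tr : traj) : R :=
  d1 (tr.1 ord0) *
  \prod_(u < H) (mu u (st tr u) (act tr u) * P (st tr u) (act tr u) (st_next tr u)).

Definition dmu (t : 'I_H) (s : S) (a : A) : R :=
  \sum_(tr : traj | (st tr t == s) && (act tr t == a)) traj_prob tr.

Definition sigmaV (V : S -> R) (s : S) (a : A) : R :=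
  \sum_(s' : S) P s a s' * V s' ^+ 2 - (\sum_(s' : S) P s a s' * V s') ^+ 2.

Variable m : nat.
Definition dataset := {ffun 'I_m -> traj}.

Definition Pr_data (E : pred dataset) : R :=
  \sum_(D : dataset | E D) \prod_(i < m) traj_prob (D i).

Definition n_sa (D : dataset) (s : S) (a : A) : nat :=
  \sum_(i < m) \sum_(u < H) ((st (D i) u == s) && (act (D i) u == a) : nat).

Definition z_tilde (V : S -> R) (D : dataset) (s : S) (a : A) : R :=
  (n_sa D s a)%:R^-1 *
  \sum_(i < m) \sum_(u < H | (st (D i) u == s) && (act (D i) u == a)) V (st_next (D i) u).

Definition sigma_tilde (V : S -> R) (D : dataset) (s : S) (a : A) : R :=
  if (n_sa D s a)%:R <= 2^-1 * m%:R * \sum_(t < H) dmu t s a then sigmaV V s a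
  else (n_sa D s a)%:R^-1 *
       \sum_(i < m) \sum_(u < H | (st (D i) u == s) && (act (D i) u == a))
          V (st_next (D i) u) ^+ 2
       - z_tilde V D s a ^+ 2.

End Defs.

(* Main.v *)
Require Import Defs.
From HB Require Import structures.
From mathcomp Require Import all_boot all_order all_algebra.
From mathcomp Require Import reals sequences exp.
From mathcomp Require Import ring lra.
Import Order.TTheory GRing.Theory Num.Theory.
Local Open Scope ring_scope.

Lemma expR_ub (R : realType) (y : R) : -1 <= y <= 1 -> expR y <= 1 + y + 2 * y ^+ 2.
Proof.
case/andP=> y1 y2.
have Hge := expR_ge1Dx (- y).
rewrite expRN in Hge.
have e0 := expR_gt0 y.
case: (lerP y 0) => hy.
  have h1 : expR y * (1 - y) <= 1.
    rewrite -(@ler_pM2r _ (expR y)^-1) ?invr_gt0 // mul1r mulrAC mulfV ?gt_eqF // mul1r.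
    lra.
  nra.
have Hg := expR_ge1Dx (- (y / 2)).
rewrite expRN in Hg.
have e1 := expR_gt0 (y / 2).
have h1 : expR (y/2) * (1 - y/2) <= 1.
  rewrite -(@ler_pM2r _ (expR (y/2))^-1) ?invr_gt0 // mul1r mulrAC mulfV ?gt_eqF // mul1r.
  lra.
have -> : expR y = expR (y/2) ^+ 2.
  rewrite -expRM_natl; congr (expR _).
  lra.
set e := expR (y/2) in h1 e1 *.
have h2 : (e * (1 - y/2)) ^+ 2 <= 1.
  have hx : 0 <= e * (1 - y/2) by apply: mulr_ge0; lra.
  by rewrite expr2 -[X in _ <= X]mul1r; apply: ler_pM.
have h3 : 1 <= (1 + y + 2 * y ^+ 2) * (1 - y/2) ^+ 2.
  have hh : 0 <= y ^+ 2 * ((1 - y) * (5/2 - y)).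
    apply: mulr_ge0; first nra.
    apply: mulr_ge0; lra.
  nra.
have h4 : 0 < (1 - y/2) ^+ 2 by nra.
nra.
Qed.

Lemma mgf_Y (R : realType) (T : finType) (p Y : T -> R) (lam : R) :
  (forall x, 0 <= p x) -> \sum_x p x = 1 -> \sum_x p x * Y x = 0 ->
  \sum_x p x * Y x ^+ 2 <= 1/4 -> (forall x, -1 <= Y x <= 1) -> 0 <= lam <= 1 ->
  \sum_x p x * expR (lam * Y x - lam ^+ 2 / 2) <= 1.
Proof.
move=> p0 p1 pY pY2 Yb /andP[l0 l1].
set c := lam ^+ 2 / 2.
have step : forall x, p x * expR (lam * Y x - c) <=
   expR (- c) * (p x + lam * (p x * Y x) + 2 * lam ^+ 2 * (p x * Y x ^+ 2)).
  move=> x; rewrite expRD.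
  have := Yb x => /andP[y1 y2].
  have hb : -1 <= lam * Y x <= 1 by apply/andP; split; nra.
  have h := expR_ub _ _ hb.
  have h2 : p x * expR (lam * Y x) <= p x * (1 + lam * Y x + 2 * (lam * Y x) ^+ 2).
    by apply: ler_wpM2l.
  have h3 := ler_wpM2l (expR_ge0 (- c)) h2.
  apply: le_trans (le_trans _ h3) _; first by rewrite mulrA mulrC mulrA.
  rewrite le_eqVlt; apply/orP; left; apply/eqP; ring.
apply: le_trans (ler_sum _ (fun x _ => step x)) _.
rewrite -mulr_sumr !big_split /= -!mulr_sumr p1 pY mulr0 addr0.
have hc : 1 + 2 * lam ^+ 2 * \sum_i p i * Y i ^+ 2 <= expR c.
  apply: le_trans (expR_ge1Dx c); rewrite /c; nra.
apply: le_trans (ler_wpM2l (expR_ge0 _) hc) _.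
by rewrite mulrC expRxMexpNx_1.
Qed.

Definition fcons {T : finType} {n} (x : T) (g : {ffun 'I_n -> T}) : {ffun 'I_n.+1 -> T} :=
  [ffun i => if unlift ord0 i is Some j then g j else x].

Definition ftail {T : finType} {n} (f : {ffun 'I_n.+1 -> T}) : {ffun 'I_n -> T} :=
  [ffun i => f (lift ord0 i)].

Lemma fcons0 {T : finType} {n} x (g : {ffun 'I_n -> T}) : fcons x g ord0 = x.
Proof. by rewrite ffunE unlift_none. Qed.

Lemma fconsS {T : finType} {n} x (g : {ffun 'I_n -> T}) j : fcons x g (lift ord0 j) = g j.
Proof. by rewrite ffunE liftK. Qed.

Lemma sum_ffunS {R : realType} {T : finType} {n} (F : {ffun 'I_n.+1 -> T} -> R) :
  \sum_(f : {ffun 'I_n.+1 -> T}) F f =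
  \sum_(x : T) \sum_(g : {ffun 'I_n -> T}) F (fcons x g).
Proof.
rewrite pair_big /=.
rewrite (reindex (fun p : T * {ffun 'I_n -> T} => fcons p.1 p.2)) //=.
exists (fun f : {ffun 'I_n.+1 -> T} => (f ord0, ftail f)).
  move=> [x g] _ /=; rewrite fcons0; congr pair.
  by apply/ffunP => j; rewrite ffunE fconsS.
move=> f _ /=; apply/ffunP => i; rewrite ffunE.
case: unliftP => [j ->|->] //.
by rewrite ffunE.
Qed.

Definition chainG {R : realType} {S A : finType} {n} (h : S -> R)
  (f : 'I_n -> S -> A -> S -> R) : R :=
  \sum_(xs : {ffun 'I_n.+1 -> S}) \sum_(as_ : {ffun 'I_n -> A})
    h (xs ord0) * \prod_(u < n) f u (xs (widen_ord (leqnSn n) u)) (as_ u) (xs (lift ord0 u)).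

Lemma chainG_step {R : realType} {S A : finType} {n} (h : S -> R)
  (f : 'I_n.+1 -> S -> A -> S -> R) :
  chainG h f = chainG (fun y => \sum_x \sum_a h x * f ord0 x a y)
                      (fun u => f (lift ord0 u)).
Proof.
rewrite /chainG sum_ffunS.
under eq_bigr => x _ do under eq_bigr => xs' _ do rewrite sum_ffunS.
rewrite exchange_big /=; apply: eq_bigr => xs' _.
under eq_bigr => x _ do rewrite exchange_big /=.
rewrite exchange_big /=; apply: eq_bigr => as' _.
rewrite mulr_suml; apply: eq_bigr => x _.
rewrite mulr_suml; apply: eq_bigr => a _.
rewrite big_ord_recl fcons0 fcons0.
have -> : widen_ord (leqnSn n.+1) ord0 = ord0 :> 'I_n.+2 by apply: val_inj.
rewrite fcons0 fconsS mulrA; congr (_ * _).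
apply: eq_bigr => u _.
have -> : widen_ord (leqnSn n.+1) (lift ord0 u) = lift ord0 (widen_ord (leqnSn n) u).
  by apply: val_inj.
by rewrite !fconsS.
Qed.

Lemma chainG0 {R : realType} {S A : finType} (h : S -> R) (f : 'I_0 -> S -> A -> S -> R) :
  chainG h f = \sum_x h x.
Proof.
rewrite /chainG sum_ffunS; apply: eq_bigr => x _.
under eq_bigr => g _ do under eq_bigr => a _ do rewrite big_ord0 mulr1 fcons0.
by rewrite !sumr_const !card_ffun !card_ord !expn0.
Qed.

Lemma chainG_le {R : realType} {S A : finType} n (h : S -> R)
  (f : 'I_n -> S -> A -> S -> R) :
  (forall x, 0 <= h x) -> (forall u x a y, 0 <= f u x a y) ->
  (forall u x, \sum_a \sum_y f u x a y <= 1) ->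
  chainG h f <= \sum_x h x.
Proof.
elim: n h f => [|n IH] h f h0 f0 f1; first by rewrite chainG0.
rewrite chainG_step; apply: le_trans (IH _ _ _ _ _) _.
- by move=> y; apply: sumr_ge0 => x _; apply: sumr_ge0 => a _; apply: mulr_ge0.
- by move=> *; apply: f0.
- by move=> *; apply: f1.
rewrite exchange_big /=; apply: ler_sum => x _.
rewrite exchange_big /=.
under eq_bigr => a _ do rewrite -mulr_sumr.
rewrite -mulr_sumr -[leRHS]mulr1; apply: ler_wpM2l => //.
Qed.

Lemma chainG_eq {R : realType} {S A : finType} n (h : S -> R)
  (f : 'I_n -> S -> A -> S -> R) :
  (forall u x, \sum_a \sum_y f u x a y = 1) ->
  chainG h f = \sum_x h x.
Proof.
elim: n h f => [|n IH] h f f1; first by rewrite chainG0.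
rewrite chainG_step IH; last by move=> *; apply: f1.
rewrite exchange_big /=; apply: eq_bigr => x _.
rewrite exchange_big /=.
under eq_bigr => a _ do rewrite -mulr_sumr.
by rewrite -mulr_sumr f1 mulr1.
Qed.

Lemma mgf_W {R : realType} {T : finType} (p W : T -> R) (sg : bool) (lam muW : R) :
  (forall x, 0 <= p x) -> \sum_x p x = 1 -> (forall x, 0 <= W x <= 1) -> 0 <= lam <= 1 ->
  muW = \sum_x p x * W x ->
  \sum_x p x * expR (lam * (if sg then W x - muW else muW - W x) - lam ^+ 2 / 2) <= 1.
Proof.
move=> p0 p1 Wb hl ->; set mu := \sum_x p x * W x.
have mu0 : 0 <= mu by apply: sumr_ge0 => x _; have := Wb x; case/andP=> ? ?; exact: mulr_ge0.
have mu1 : mu <= 1.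
  rewrite -p1; apply: ler_sum => x _; have := Wb x; case/andP=> w0 w1.
  by rewrite -[leRHS]mulr1; apply: ler_wpM2l.
have hW2 : \sum_x p x * W x ^+ 2 <= mu.
  apply: ler_sum => x _; have := Wb x; case/andP=> w0 w1; apply: ler_wpM2l => //.
  by rewrite expr2 -[leRHS]mulr1; apply: ler_wpM2l.
apply: mgf_Y => //.
- case: sg.
    under eq_bigr => x _ do rewrite mulrBr.
    by rewrite big_split /= sumrN -mulr_suml p1 mul1r subrr.
  under eq_bigr => x _ do rewrite mulrBr.
  by rewrite big_split /= sumrN -mulr_suml p1 mul1r subrr.
- have e : forall x, p x * (if sg then W x - mu else mu - W x) ^+ 2 =
                     p x * W x ^+ 2 - 2 * mu * (p x * W x) + mu ^+ 2 * p x.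
    by move=> x; case: sg; ring.
  under eq_bigr => x _ do rewrite e.
  rewrite !big_split /= sumrN -!mulr_sumr p1 mulr1 -/mu.
  have hh : 0 <= (mu - 1/2) ^+ 2 by apply: sqr_ge0.
  lra.
- move=> x; have := Wb x; case/andP=> ? ?; case: sg; apply/andP; split; lra.
Qed.

Lemma traj_exp {R : realType} {S A : finType} {H : nat} (d1 : S -> R)
  (mu : 'I_H -> S -> A -> R) (P : S -> A -> S -> R) (g : S -> A -> S -> R) :
  \sum_(tr : traj S A H) traj_prob d1 mu P tr *
     \prod_(u < H) g (st tr u) (act tr u) (st_next tr u) =
  chainG d1 (fun u x a y => mu u x a * P x a y * g x a y).
Proof.
rewrite /chainG pair_big /=; apply: eq_bigr => -[xs as_] _.
by rewrite /traj_prob /st /act /st_next /= -mulrA -big_split.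
Qed.

Lemma data_exp {R : realType} {S A : finType} {H m : nat} (d1 : S -> R)
  (mu : 'I_H -> S -> A -> R) (P : S -> A -> S -> R) (F : traj S A H -> R) :
  \sum_(D : dataset S A H m) (\prod_(i < m) traj_prob d1 mu P (D i)) * \prod_(i < m) F (D i) =
  (\sum_(tr : traj S A H) traj_prob d1 mu P tr * F tr) ^+ m.
Proof.
under eq_bigr => D _ do rewrite -big_split /=.
rewrite -(bigA_distr_bigA (fun (i : 'I_m) tr => traj_prob d1 mu P tr * F tr)) /=.
by rewrite prodr_const card_ord.
Qed.

Definition vis {S A : finType} {H m : nat} (D : dataset S A H m) (s : S) (a : A)
  (i : 'I_m) (u : 'I_H) : bool := (st (D i) u == s) && (act (D i) u == a).

Lemma traj_prob_ge0 {R : realType} {S A : finType} {H : nat} (d1 : S -> R)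
  (mu : 'I_H -> S -> A -> R) (P : S -> A -> S -> R) tr :
  is_distr d1 -> (forall u x, is_distr (mu u x)) -> (forall x b, is_distr (P x b)) ->
  0 <= traj_prob d1 mu P tr.
Proof.
move=> [d0 _] hmu hP; apply: mulr_ge0 => //; apply: prodr_ge0 => u _.
by apply: mulr_ge0; [case: (hmu u (st tr u)) | case: (hP (st tr u) (act tr u))].
Qed.

Lemma conc {R : realType} {S A : finType} {H m : nat} (d1 : S -> R)
  (mu : 'I_H -> S -> A -> R) (P : S -> A -> S -> R) (s : S) (a : A)
  (W : S -> R) (sg : bool) (lam K muW : R) :
  is_distr d1 -> (forall u x, is_distr (mu u x)) -> (forall x b, is_distr (P x b)) ->
  (forall x, 0 <= W x <= 1) -> 0 <= lam <= 1 -> 0 < K ->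
  muW = \sum_y P s a y * W y ->
  Pr_data d1 mu P (m:=m) (fun D => K <= expR (\sum_i \sum_(u < H | vis D s a i u)
      (lam * (if sg then W (st_next (D i) u) - muW else muW - W (st_next (D i) u))
        - lam ^+ 2 / 2))) <= K^-1.
Proof.
move=> hd1 hmu hP Wb hl K0 hmuW.
set c := fun y => lam * (if sg then W y - muW else muW - W y) - lam ^+ 2 / 2.
pose g := fun x b y => expR (if (x == s) && (b == a) then c y else 0).
have w0 : forall D : dataset S A H m, 0 <= \prod_(i < m) traj_prob d1 mu P (D i).
  by move=> D; apply: prodr_ge0 => i _; apply: traj_prob_ge0.
have hZ : forall D : dataset S A H m,
    expR (\sum_i \sum_(u < H | vis D s a i u) c (st_next (D i) u)) =
    \prod_(i < m) \prod_(u < H) g (st (D i) u) (act (D i) u) (st_next (D i) u).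
  move=> D; rewrite expR_sum; apply: eq_bigr => i _.
  by rewrite big_mkcond /= expR_sum.
rewrite /Pr_data.
apply: (@le_trans _ _ (\sum_(D : dataset S A H m) (\prod_(i < m) traj_prob d1 mu P (D i)) *
     (expR (\sum_i \sum_(u < H | vis D s a i u) c (st_next (D i) u)) / K))).
  rewrite [leRHS](bigID (fun D : dataset S A H m => K <= expR (\sum_i \sum_(u < H | vis D s a i u) c (st_next (D i) u)))) /=.
  rewrite -[leLHS]addr0; apply: lerD.
    apply: ler_sum => D hD; rewrite -[leLHS]mulr1; apply: ler_wpM2l => //.
    by rewrite ler_pdivlMr // mul1r.
  apply: sumr_ge0 => D _; apply: mulr_ge0 => //; apply: divr_ge0; [exact: expR_ge0 | exact: ltW].
under eq_bigr => D _ do rewrite hZ mulrA.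
rewrite -mulr_suml mulrC ler_piMr ?invr_ge0 ?(ltW K0) //.
rewrite (data_exp d1 mu P (fun tr => \prod_(u < H) g (st tr u) (act tr u) (st_next tr u))) traj_exp.
have hf0 : forall u x b y, 0 <= mu u x b * P x b y * g x b y.
  move=> u x b y; apply: mulr_ge0; last exact: expR_ge0.
  by apply: mulr_ge0; [case: (hmu u x) | case: (hP x b)].
have hG0 : 0 <= chainG d1 (fun u x b y => mu u x b * P x b y * g x b y).
  rewrite /chainG; apply: sumr_ge0 => xs _; apply: sumr_ge0 => as_ _.
  apply: mulr_ge0; first by case: hd1.
  by apply: prodr_ge0 => u _; apply: hf0.
apply: exprn_ile1 => //.
apply: le_trans (chainG_le _ _ _ _ _ _) _.
- by case: hd1.
- exact: hf0.
- move=> u x.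
  have [mu0 mu1] := hmu u x.
  rewrite -[leRHS]mu1; apply: ler_sum => b _.
  under eq_bigr => y _ do rewrite -mulrA.
  rewrite -mulr_sumr -[leRHS]mulr1; apply: ler_wpM2l => //.
  have [P0 P1] := hP x b.
  rewrite /g; case E: ((x == s) && (b == a)).
    move/andP: E => [/eqP Ex /eqP Eb]; subst x b.
    by apply: mgf_W => //; case: (hP s a).
  by under eq_bigr => y _ do rewrite expR0 mulr1; rewrite P1.
- by case: hd1 => _ ->.
Qed.

Lemma dev_bound {R : realType} (n N L r lam SW mu : R) :
  0 < N -> 0 < L -> N / 2 < n -> r = Num.sqrt (L / N) ->
  lam = (if 2 * r <= 1 then 2 * r else 0) -> 0 <= SW <= n -> 0 <= mu <= 1 ->
  lam * SW - (lam * mu + lam ^+ 2 / 2) * n < L ->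
  (lam * mu - lam ^+ 2 / 2) * n - lam * SW < L ->
  `|SW / n - mu| <= 2 * r.
Proof.
move=> N0 L0 hn hr hlam /andP[S0 S1] /andP[m0 m1] h1 h2.
have n0 : 0 < n by lra.
have r0 : 0 < r by rewrite hr sqrtr_gt0 divr_gt0.
have r2 : r ^+ 2 = L / N by rewrite hr sqr_sqrtr // divr_ge0 // ltW.
have hL : L = r ^+ 2 * N by rewrite r2 divfK // gt_eqF.
have ha0 : 0 <= SW / n by apply: divr_ge0 => //; apply: ltW.
have ha1 : SW / n <= 1 by rewrite ler_pdivrMr // mul1r.
move: hlam; case: ifP => hr1 hlam.
  subst lam.
  have k1 : SW - n * mu < 2 * r * n.
    rewrite -(@ltr_pM2l _ (2 * r)); last lra.
    nra.
  have k2 : n * mu - SW < 2 * r * n.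
    rewrite -(@ltr_pM2l _ (2 * r)); last lra.
    nra.
  have e1 : SW / n - mu = (SW - n * mu) / n by field; apply/eqP; lra.
  rewrite ler_norml e1; apply/andP; split.
    rewrite ler_pdivlMr //; lra.
  rewrite ler_pdivrMr //; lra.
have : 1 < 2 * r by rewrite ltNge hr1.
move=> hr2; apply: le_trans (_ : 1 <= _); last lra.
rewrite ler_norml; apply/andP; split; lra.
Qed.

Lemma core {R : realType} (Hr n r a b mu1 mu2 q : R) :
  0 < Hr -> 0 <= q -> 0 <= a <= 1 -> 0 <= mu1 <= 1 ->
  `|a - mu1| <= 2 * r -> `|b - mu2| <= 2 * r ->
  `|Hr ^+ 2 * b - (Hr * a) ^+ 2 - (Hr ^+ 2 * mu2 - (Hr * mu1) ^+ 2)|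
     <= 6 * Hr ^+ 2 * r + q.
Proof.
move=> H0 q0 /andP[a0 a1] /andP[m0 m1] ha hb.
have -> : Hr ^+ 2 * b - (Hr * a) ^+ 2 - (Hr ^+ 2 * mu2 - (Hr * mu1) ^+ 2) =
          Hr ^+ 2 * ((b - mu2) - (a - mu1) * (a + mu1)) by ring.
rewrite normrM ger0_norm ?sqr_ge0 //.
have hh : `|(b - mu2) - (a - mu1) * (a + mu1)| <= 6 * r.
  apply: le_trans (ler_normB _ _) _.
  rewrite normrM (ger0_norm (_ : 0 <= a + mu1)); last lra.
  have : `|a - mu1| * (a + mu1) <= 2 * r * 2.
    apply: ler_pM; [exact: normr_ge0 | lra | exact: ha | lra].
  lra.
have H2 : 0 <= Hr ^+ 2 by apply: sqr_ge0.
have := ler_wpM2l H2 hh.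
lra.
Qed.

Lemma dsum_aff {R : realType} {I J : finType} (P : I -> J -> bool) (f : I -> J -> R) (al be : R) :
  \sum_i \sum_(j | P i j) (al * f i j + be) =
  al * (\sum_i \sum_(j | P i j) f i j) + be * (\sum_i \sum_(j | P i j) (1 : R)).
Proof.
rewrite !mulr_sumr -big_split /=; apply: eq_bigr => i _.
rewrite !mulr_sumr -big_split /=; apply: eq_bigr => j _.
by rewrite mulr1.
Qed.

Lemma dsum_lin {R : realType} {I J : finType} (P : I -> J -> bool) (f : I -> J -> R)
  (lam mu c : R) (sg : bool) :
  \sum_i \sum_(j | P i j) (lam * (if sg then f i j - mu else mu - f i j) - c) =
  if sg then lam * (\sum_i \sum_(j | P i j) f i j) - (lam * mu + c) * (\sum_i \sum_(j | P i j) (1 : R))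
  else (lam * mu - c) * (\sum_i \sum_(j | P i j) (1 : R)) - lam * (\sum_i \sum_(j | P i j) f i j).
Proof.
case: sg.
  rewrite -mulNr -dsum_aff; apply: eq_bigr => i _; apply: eq_bigr => j _; ring.
rewrite addrC -mulNr -dsum_aff; apply: eq_bigr => i _; apply: eq_bigr => j _; ring.
Qed.

Lemma union_bound {R : realType} {T I : finType} (w : T -> R) (E : pred T) (B : I -> pred T) :
  (forall x, 0 <= w x) -> \sum_x w x = 1 ->
  (forall x, (forall i, ~~ B i x) -> E x) ->
  1 - \sum_i \sum_(x | B i x) w x <= \sum_(x | E x) w x.
Proof.
move=> w0 w1 hE.
rewrite -w1 (bigID E) /= lerBlDr lerD2l.
have -> : \sum_i \sum_(x | B i x) w x = \sum_x \sum_i (B i x)%:R * w x.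
  under eq_bigr => i _ do rewrite big_mkcond /=.
  rewrite exchange_big /=; apply: eq_bigr => x _; apply: eq_bigr => i _.
  by case: (B i x); rewrite ?mul1r ?mul0r.
rewrite [leRHS](bigID E) /= -[leLHS]add0r; apply: lerD.
  by apply: sumr_ge0 => x _; apply: sumr_ge0 => i _; apply: mulr_ge0.
apply: ler_sum => x nEx.
have [/existsP [i Bi]|] := boolP [exists i, B i x]; last first.
  by move/existsPn => h; rewrite hE in nEx.
rewrite (bigD1 i) //= Bi mul1r -[leLHS]addr0 lerD2l.
by apply: sumr_ge0 => j _; apply: mulr_ge0.
Qed.

Lemma nsa_sum {R : realType} {S A : finType} {H m : nat} (D : dataset S A H m) s a :
  (n_sa D s a)%:R = \sum_i \sum_(u < H | vis D s a i u) (1 : R).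
Proof.
rewrite /n_sa natr_sum; apply: eq_bigr => i _.
rewrite natr_sum [RHS]big_mkcond /=. apply: eq_bigr => u _.
by rewrite /vis; case: (_ && _).
Qed.

Lemma total_mass {R : realType} {S A : finType} {H m : nat} (d1 : S -> R)
  (mu : 'I_H -> S -> A -> R) (P : S -> A -> S -> R) :
  is_distr d1 -> (forall u x, is_distr (mu u x)) -> (forall x b, is_distr (P x b)) ->
  \sum_(D : dataset S A H m) \prod_(i < m) traj_prob d1 mu P (D i) = 1.
Proof.
move=> hd1 hmu hP.
have := data_exp (m := m) d1 mu P (fun _ => 1).
under eq_bigr => D _ do rewrite prodr_const expr1n mulr1.
move=> ->.
have := traj_exp d1 mu P (fun _ _ _ => 1).
under eq_bigr => tr _ do rewrite prodr_const expr1n.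
move=> ->.
rewrite chainG_eq; first by case: hd1 => _ ->; rewrite expr1n.
move=> u x.
under eq_bigr => b _ do (under eq_bigr => y _ do rewrite mulr1; rewrite -mulr_sumr; case: (hP x b) => _ ->; rewrite mulr1).
by case: (hmu u x).
Qed.

Definition Wf {R : realType} {S : finType} {H : nat} (Vin : 'I_H -> S -> R) (t : 'I_H)
  (k : bool) (y : S) : R :=
  if k then Vin t y / H%:R else (Vin t y / H%:R) ^+ 2.

Definition lamf {R : realType} (L N : R) : R :=
  if 2 * Num.sqrt (L / N) <= 1 then 2 * Num.sqrt (L / N) else 0.

Lemma point {R : realType} {S A : finType} {H m : nat}
  (d1 : S -> R) (mu : 'I_H -> S -> A -> R) (P : S -> A -> S -> R)
  (Vin : 'I_H -> S -> R) (L : R) (D : dataset S A H m) (t : 'I_H) (s : S) (a : A) :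
  (forall s a, is_distr (P s a)) ->
  (forall t s, 0 <= Vin t s <= H%:R) -> 0 < L ->
  0 < \sum_(t' < H) dmu d1 mu P t' s a ->
  (forall k sg : bool,
     \sum_i \sum_(u < H | vis D s a i u)
       (lamf L (m%:R * \sum_(t' < H) dmu d1 mu P t' s a) *
         (if sg then Wf Vin t k (st_next (D i) u) - \sum_y P s a y * Wf Vin t k y
          else \sum_y P s a y * Wf Vin t k y - Wf Vin t k (st_next (D i) u))
        - lamf L (m%:R * \sum_(t' < H) dmu d1 mu P t' s a) ^+ 2 / 2) < L) ->
  `|sigma_tilde d1 mu P (Vin t) D s a - sigmaV P (Vin t) s a| <=
          6 * H%:R ^+ 2 *
            Num.sqrt (L / (m%:R * \sum_(t' < H) dmu d1 mu P t' s a))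
          + 4 * H%:R ^+ 2 * L / (m%:R * \sum_(t' < H) dmu d1 mu P t' s a).
Proof.
move=> hP hV L0 hd hgood.
set ds := \sum_(t' < H) dmu d1 mu P t' s a in hd hgood *.
set N := m%:R * ds in hgood *.
have Hpos : (0 < H)%N by apply: (leq_ltn_trans (leq0n t)); exact: ltn_ord.
have Hr0 : 0 < (H%:R : R) by rewrite ltr0n.
have q0 : 0 <= 4 * H%:R ^+ 2 * L / N.
  apply: divr_ge0; last by apply: mulr_ge0 => //; apply: ltW.
  by apply: mulr_ge0 => //; [apply: mulr_ge0 => //; apply: sqr_ge0 | apply: ltW].
rewrite /sigma_tilde; case: ifP => hn.
  rewrite subrr normr0; apply: addr_ge0 => //.
  by apply: mulr_ge0; [apply: mulr_ge0 => //; apply: sqr_ge0 | apply: sqrtr_ge0].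
set n := (n_sa D s a)%:R.
have hn' : N / 2 < n.
  have e : 2^-1 * m%:R * ds = N / 2 by rewrite /N; ring.
  by rewrite e in hn; rewrite ltNge hn.
have N0 : 0 < N.
  rewrite /N pmulr_rgt0 // ltr0n lt0n; apply/negP => /eqP m0.
  move: hn'; rewrite /n /n_sa; move: D {hgood n hn}; rewrite m0 => D.
  by rewrite big_ord0 /N m0 mul0r mul0r ltxx.
have n0 : 0 < n by apply: lt_trans hn'; apply: divr_gt0.
have hns : n = \sum_i \sum_(u < H | vis D s a i u) (1 : R) by rewrite /n nsa_sum.
set r := Num.sqrt (L / N).
set lam := lamf L N in hgood.
have Wb : forall k y, 0 <= Wf Vin t k y <= 1.
  move=> k y; have /andP[v0 v1] := hV t y.
  have w0 : 0 <= Vin t y / H%:R by apply: divr_ge0 => //; apply: ltW.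
  have w1 : Vin t y / H%:R <= 1 by rewrite ler_pdivrMr // mul1r.
  rewrite /Wf; case: k; apply/andP; split => //.
    by apply: sqr_ge0.
  by rewrite expr2 -[leRHS]mulr1; apply: ler_pM.
have [P0 P1] := hP s a.
have mub : forall k, 0 <= \sum_y P s a y * Wf Vin t k y <= 1.
  move=> k; apply/andP; split.
    by apply: sumr_ge0 => y _; apply: mulr_ge0 => //; case/andP: (Wb k y).
  rewrite -P1; apply: ler_sum => y _; rewrite -[leRHS]mulr1; apply: ler_wpM2l => //.
  by case/andP: (Wb k y).
have SWb : forall k, 0 <= \sum_i \sum_(u < H | vis D s a i u) Wf Vin t k (st_next (D i) u) <= n.
  move=> k; apply/andP; split.
    by apply: sumr_ge0 => i _; apply: sumr_ge0 => u _; case/andP: (Wb k (st_next (D i) u)).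
  rewrite hns; apply: ler_sum => i _; apply: ler_sum => u _.
  by case/andP: (Wb k (st_next (D i) u)).
have dev : forall k, `|(\sum_i \sum_(u < H | vis D s a i u) Wf Vin t k (st_next (D i) u)) / n
                        - \sum_y P s a y * Wf Vin t k y| <= 2 * r.
  move=> k.
  have g1 := hgood k true; have g2 := hgood k false.
  have e1 := dsum_lin (vis D s a) (fun i u => Wf Vin t k (st_next (D i) u)) lam
     (\sum_y P s a y * Wf Vin t k y) (lam ^+ 2 / 2) true.
  have e2 := dsum_lin (vis D s a) (fun i u => Wf Vin t k (st_next (D i) u)) lam
     (\sum_y P s a y * Wf Vin t k y) (lam ^+ 2 / 2) false.
  cbv beta iota in e1, e2, g1, g2.
  rewrite e1 -hns in g1; rewrite e2 -hns in g2.
  by apply: (dev_bound _ _ _ _ _ _ _ N0 L0 hn' erefl erefl (SWb k) (mub k)).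
set SW := fun k => \sum_i \sum_(u < H | vis D s a i u) Wf Vin t k (st_next (D i) u) in SWb dev.
set mw := fun k => \sum_y P s a y * Wf Vin t k y in mub dev.
have Hn0 : (H%:R : R) != 0 by rewrite gt_eqF.
have eV2 : \sum_i \sum_(u < H | (st (D i) u == s) && (act (D i) u == a))
             Vin t (st_next (D i) u) ^+ 2 = H%:R ^+ 2 * SW false.
  rewrite /SW mulr_sumr; apply: eq_bigr => i _; rewrite mulr_sumr; apply: eq_bigr => u _.
  by rewrite /Wf; field.
have eV1 : \sum_i \sum_(u < H | (st (D i) u == s) && (act (D i) u == a))
             Vin t (st_next (D i) u) = H%:R * SW true.
  rewrite /SW mulr_sumr; apply: eq_bigr => i _; rewrite mulr_sumr; apply: eq_bigr => u _.
  by rewrite /Wf; field.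
have eP2 : \sum_y P s a y * Vin t y ^+ 2 = H%:R ^+ 2 * mw false.
  rewrite /mw mulr_sumr; apply: eq_bigr => ? _; by rewrite /Wf; field.
have eP1 : \sum_y P s a y * Vin t y = H%:R * mw true.
  rewrite /mw mulr_sumr; apply: eq_bigr => ? _; by rewrite /Wf; field.
rewrite /z_tilde /sigmaV -/n eV2 eV1 eP2 eP1.
have -> : n^-1 * (H%:R ^+ 2 * SW false) = H%:R ^+ 2 * (SW false / n) by ring.
have -> : n^-1 * (H%:R * SW true) = H%:R * (SW true / n) by ring.
apply: (core H%:R n r (SW true / n) (SW false / n) (mw true) (mw false) (4 * H%:R ^+ 2 * L / N) Hr0 q0 _ (mub true) (dev true) (dev false)).
case/andP: (SWb true) => s0 s1.
apply/andP; split; first by apply: divr_ge0 => //; apply: ltW.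
by rewrite ler_pdivrMr // mul1r.
Qed.

Theorem lemmaC2 (R : realType) (S A : finType) (H m : nat)
  (d1 : S -> R) (mu : 'I_H -> S -> A -> R) (P : S -> A -> S -> R)
  (Vin : 'I_H -> S -> R) (delta : R) :
  is_distr d1 ->
  (forall u s, is_distr (mu u s)) ->
  (forall s a, is_distr (P s a)) ->
  (forall t s, 0 <= Vin t s <= H%:R) ->
  0 < delta < 1 ->
  Pr_data d1 mu P (m:=m)
    (fun D => [forall t : 'I_H, forall s : S, forall a : A,
       (0 < \sum_(t' < H) dmu d1 mu P t' s a) ==>
       (`|sigma_tilde d1 mu P (Vin t) D s a - sigmaV P (Vin t) s a| <=
          6 * H%:R ^+ 2 *
            Num.sqrt (ln (4 * H%:R * #|S|%:R * #|A|%:R / delta) /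
                      (m%:R * \sum_(t' < H) dmu d1 mu P t' s a))
          + 4 * H%:R ^+ 2 * ln (4 * H%:R * #|S|%:R * #|A|%:R / delta) /
                      (m%:R * \sum_(t' < H) dmu d1 mu P t' s a))])
  >= 1 - delta.
Proof.
move=> hd1 hmu hP hV /andP[dl0 dl1].
have h14 : (1 : R) < 4 by lra.
set X := 4 * H%:R * #|S|%:R * #|A|%:R.
set L := ln (X / delta).
have Xpos : forall (t : 'I_H) (s : S) (a : A), 4 <= X.
  move=> t s a.
  have h1 : 1 <= (H%:R : R) by rewrite ler1n; apply: (leq_ltn_trans (leq0n t)); exact: ltn_ord.
  have h2 : 1 <= (#|S|%:R : R) by rewrite ler1n; apply/card_gt0P; exists s.
  have h3 : 1 <= (#|A|%:R : R) by rewrite ler1n; apply/card_gt0P; exists a.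
  rewrite /X.
  have : 1 <= H%:R * #|S|%:R * (#|A|%:R : R).
    have : 1 <= H%:R * (#|S|%:R : R) by nra.
    nra.
  lra.
have Lpos : forall (t : 'I_H) (s : S) (a : A), 0 < L.
  move=> t s a; rewrite /L; apply: ln_gt0.
  rewrite ltr_pdivlMr // mul1r; apply: (lt_trans dl1); exact: lt_le_trans (Xpos t s a).
pose lamsa s a := lamf L (m%:R * \sum_(t' < H) dmu d1 mu P t' s a).
pose B := fun (idx : 'I_H * S * A * bool * bool) (D : dataset S A H m) =>
  let: (t, s, a, k, sg) := idx in
  expR L <= expR (\sum_i \sum_(u < H | vis D s a i u)
       (lamsa s a *
         (if sg then Wf Vin t k (st_next (D i) u) - \sum_y P s a y * Wf Vin t k y
          else \sum_y P s a y * Wf Vin t k y - Wf Vin t k (st_next (D i) u))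
        - lamsa s a ^+ 2 / 2)).
have w0 : forall D : dataset S A H m, 0 <= \prod_(i < m) traj_prob d1 mu P (D i).
  by move=> D; apply: prodr_ge0 => i _; apply: traj_prob_ge0.
have tot := total_mass (m := m) d1 mu P hd1 hmu hP.
rewrite /Pr_data.
apply: le_trans (union_bound _ _ B w0 tot _).
  rewrite lerD2l lerN2.
  apply: (@le_trans _ _ (\sum_(idx : 'I_H * S * A * bool * bool) (expR L)^-1)).
    apply: ler_sum => -[[[[t s] a] k] sg] _.
    apply: (conc d1 mu P s a (Wf Vin t k) sg (lamsa s a) (expR L)
              (\sum_y P s a y * Wf Vin t k y)) => //.
    - move=> y; have /andP[v0 v1] := hV t y.
      have Hr0 : 0 < (H%:R : R) by rewrite ltr0n; apply: (leq_ltn_trans (leq0n t)); exact: ltn_ord.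
      have w0' : 0 <= Vin t y / H%:R by apply: divr_ge0 => //; apply: ltW.
      have w1 : Vin t y / H%:R <= 1 by rewrite ler_pdivrMr // mul1r.
      rewrite /Wf; case: k; apply/andP; split => //.
        by apply: sqr_ge0.
      by rewrite expr2 -[leRHS]mulr1; apply: ler_pM.
    - rewrite /lamsa /lamf; case: ifP => h; apply/andP; split => //.
      by apply: mulr_ge0 => //; apply: sqrtr_ge0.
    - exact: expR_gt0.
  rewrite sumr_const !card_prod card_ord card_bool -mulr_natl.
  have -> : ((H * #|S| * #|A| * 2 * 2)%:R : R) = X by rewrite /X !natrM; ring.
  have X0 : 0 <= X by rewrite /X !mulr_ge0.
  case: (eqVneq X 0) => [->|Xn0]; first by rewrite mul0r ltW.
  have Xp : 0 < X by rewrite lt_def Xn0.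
  rewrite /L lnK; last by rewrite posrE divr_gt0.
  rewrite invf_div mulrC divfK //.
move=> D hall.
apply/forallP => t; apply/forallP => s; apply/forallP => a; apply/implyP => hd.
apply: (point d1 mu P Vin L D t s a hP hV (Lpos t s a) hd).
move=> k sg; have := hall (t, s, a, k, sg).
by rewrite /B ler_expR -ltNge.
Qed.
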